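(* Let $\mathcal H=\mathcal H_A\otimes\mathcal H_B$ be finite-dimensional, with local Hamiltonians $H_X(t_i)=\sum_{l_X}E^i_{l_X}\Pi^i_{l_X}$, $H_X(t_f)=\sum_{k_X}E^f_{k_X}\Pi^f_{k_X}$ ($X=A,B$), $\beta>0$, local thermal states $\gamma^X_{\beta,i}=e^{-\beta H_X(t_i)}/\mathcal Z^X_{\beta,i}$, $\gamma^X_{\beta,f}=e^{-\beta H_X(t_f)}/\mathcal Z^X_{\beta,f}$, $\gamma_{\beta,i}=\gamma^A_{\beta,i}\otimes\gamma^B_{\beta,i}$, $\gamma_{\beta,f}=\gamma^A_{\beta,f}\otimes\gamma^B_{\beta,f}$, and $\Delta F=-\beta^{-1}\ln\big(\mathcal Z^A_{\beta,f}\mathcal Z^B_{\beta,f}/(\mathcal Z^A_{\beta,i}\mathcal Z^B_{\beta,i})\big)$. Let $\Phi[X]=\sum_\alpha A_\alpha XA_\alpha^\dagger$ be a CPTP map on $\mathcal H$ with a full-rank fixed point $\pi$, and $\tilde\Phi[X]=\sum_\alpha\tilde A_\alpha X\tilde A_\alpha^\dagger$ with $\tilde A_\alpha=\pi^{1/2}A_\alpha^\dagger\pi^{-1/2}$. Let $\rho_i=\gamma_{\beta,i}+\mathfrak E_{AB}$ and $\tilde\rho_i=\gamma_{\beta,f}+\tilde{\mathfrak E}_{AB}$ be density operators, with $\mathfrak E_{AB},\tilde{\mathfrak E}_{AB}$ Hermitian and having vanishing partial traces over $A$ and over $B$. Write $\mathbf l=(l_A,l_B)$, $\mathbf k=(k_A,k_B)$,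 $\Pi^i_{\mathbf l}=\Pi^i_{l_A}\otimes\Pi^i_{l_B}$, $\Pi^f_{\mathbf k}=\Pi^f_{k_A}\otimes\Pi^f_{k_B}$ and, for an operator $\mathcal A$, $p^i_{\mathbf l}(\mathcal A)=\mathrm{Tr}(\mathcal A\Pi^i_{\mathbf l})$, $p^f_{\mathbf k}(\mathcal A)=\mathrm{Tr}(\Phi[\mathcal A]\Pi^f_{\mathbf k})$, $\tilde p^i_{\mathbf k}(\mathcal A)=\mathrm{Tr}(\mathcal A\Pi^f_{\mathbf k})$, $\tilde p^f_{\mathbf l}(\mathcal A)=\mathrm{Tr}(\tilde\Phi[\mathcal A]\Pi^i_{\mathbf l})$; $P_\Gamma(\mathbf l,\mathbf k)=p^i_{\mathbf l}(\rho_i)p^f_{\mathbf k}(\rho_i)$, $P_{\tilde\Gamma}(\mathbf k,\mathbf l)=\tilde p^i_{\mathbf k}(\tilde\rho_i)\tilde p^f_{\mathbf l}(\tilde\rho_i)$. Define $\Psi^{(i)}_{\mathbf l}=\ln\big(1+\tfrac{p^i_{\mathbf l}(\mathfrak E_{AB})}{p^i_{\mathbf l}(\gamma_{\beta,i})}\big)$, $\Psi^{(f)}_{\mathbf k}=\ln\big(1+\tfrac{p^f_{\mathbf k}(\mathfrak E_{AB})}{p^f_{\mathbf k}(\gamma_{\beta,i})}\big)$, $\tilde\Psi^{(i)}_{\mathbf k}=\ln\big(1+\tfrac{\tilde p^i_{\mathbf k}(\tilde{\mathfrak E}_{AB})}{\tilde p^i_{\mathbf k}(\gamma_{\beta,f})}\big)$,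 $\tilde\Psi^{(f)}_{\mathbf l}=\ln\big(1+\tfrac{\tilde p^f_{\mathbf l}(\tilde{\mathfrak E}_{AB})}{\tilde p^f_{\mathbf l}(\gamma_{\beta,f})}\big)$, $\Delta\Psi_{\mathbf l,\mathbf k}=\Psi^{(i)}_{\mathbf l}+\Psi^{(f)}_{\mathbf k}-\tilde\Psi^{(i)}_{\mathbf k}-\tilde\Psi^{(f)}_{\mathbf l}$ and $\Delta\sigma_{\mathbf l,\mathbf k}=\ln p^f_{\mathbf k}(\gamma_{\beta,i})-\ln\tilde p^f_{\mathbf l}(\gamma_{\beta,f})$. Then, for every $(\mathbf l,\mathbf k)$ for which these quantities are well defined, $$\ln\frac{P_\Gamma(\mathbf l,\mathbf k)}{P_{\tilde\Gamma}(\mathbf k,\mathbf l)}=\beta(\Delta E_{\mathbf l,\mathbf k}-\Delta F)+\Delta\sigma_{\mathbf l,\mathbf k}+\Delta\Psi_{\mathbf l,\mathbf k},\qquad \Delta E_{\mathbf l,\mathbf k}=E^f_{k_A}+E^f_{k_B}-E^i_{l_A}-E^i_{l_B}.$$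
   Context: $\Phi$ and $\tilde\Phi$ are extended linearly to arbitrary (not necessarily positive) operators. *)

(* Defs.v *)
From HB Require Import structures.
From mathcomp Require Import all_boot all_order all_algebra.
From mathcomp Require Import complex mxtens.
From mathcomp Require Import reals sequences exp.

Set Implicit Arguments.
Unset Strict Implicit.
Unset Printing Implicit Defensive.

Import Order.TTheory GRing.Theory Num.Theory.
Local Open Scope ring_scope.
Local Open Scope complex_scope.

Section QDefs.
Variable R : realType.
Local Notation C := R[i].

Definition adj {m n} (A : 'M[C]_(m, n)) : 'M[C]_(n, m) :=
  (map_mx (fun z => conjc z) A)^T.

Definition is_hermitian {n} (A : 'M[C]_n) : Prop := adj A = A.

Definition psd {n} (A : 'M[C]_n) : Prop :=
  is_hermitian A /\ forall v : 'cV[C]_n, 0 <= (adj v *m A *m v) 0 0.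

Definition density {n} (A : 'M[C]_n) : Prop := psd A /\ \tr A = 1.

Definition rank_one_resolution {n} (P : 'I_n -> 'M[C]_n) : Prop :=
  [/\ forall l, P l *m P l = P l,
      forall l, is_hermitian (P l),
      forall l m, l != m -> P l *m P m = 0,
      \sum_l P l = 1%:M &
      forall l, \tr (P l) = 1].

Definition hamiltonian {n} (E : 'I_n -> R) (P : 'I_n -> 'M[C]_n) : 'M[C]_n :=
  \sum_l (E l)%:C *: P l.

(* e^{-beta H} for H = sum_l E_l Pi_l (spectral functional calculus) *)
Definition expmH {n} (beta : R) (E : 'I_n -> R) (P : 'I_n -> 'M[C]_n) : 'M[C]_n :=
  \sum_l (expR (- beta * E l))%:C *: P l.

Definition partZ {n} (beta : R) (E : 'I_n -> R) (P : 'I_n -> 'M[C]_n) : R :=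
  complex.Re (\tr (expmH beta E P)).

Definition gibbs {n} (beta : R) (E : 'I_n -> R) (P : 'I_n -> 'M[C]_n) : 'M[C]_n :=
  ((partZ beta E P)^-1)%:C *: expmH beta E P.

Definition ptraceA nA nB (X : 'M[C]_(nA * nB)) : 'M[C]_nB :=
  \matrix_(j, j') \sum_(i < nA) X (mxtens_index (i, j)) (mxtens_index (i, j')).
Definition ptraceB nA nB (X : 'M[C]_(nA * nB)) : 'M[C]_nA :=
  \matrix_(i, i') \sum_(j < nB) X (mxtens_index (i, j)) (mxtens_index (i', j)).

Definition kraus {N K} (A : 'I_K -> 'M[C]_N) (X : 'M[C]_N) : 'M[C]_N :=
  \sum_a A a *m X *m adj (A a).

Definition trace_preserving {N K} (A : 'I_K -> 'M[C]_N) : Prop :=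
  \sum_a adj (A a) *m A a = 1%:M.

(* Petz-type reversed Kraus operators  pi^{1/2} A_a^dagger pi^{-1/2},
   given S = pi^{1/2} *)
Definition rev_kraus {N K} (S : 'M[C]_N) (A : 'I_K -> 'M[C]_N) : 'I_K -> 'M[C]_N :=
  fun a => S *m adj (A a) *m invmx S.

(* real trace Tr(X Y) (used for probabilities, which are real here) *)
Definition trR {N} (X Y : 'M[C]_N) : R := complex.Re (\tr (X *m Y)).

End QDefs.
Arguments ptraceA {R} nA nB X.
Arguments ptraceB {R} nA nB X.

Definition tens {R : pzRingType} {m n} (A : 'M[R]_m) (B : 'M[R]_n) : 'M[R]_(m * n) :=
  tensmx A B.

(* Main.v *)
Require Import Defs.
From HB Require Import structures.
From mathcomp Require Import all_boot all_order all_algebra.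
From mathcomp Require Import complex mxtens.
From mathcomp Require Import reals sequences exp.
From mathcomp Require Import ring lra.
Import Order.TTheory GRing.Theory Num.Theory.
Local Open Scope ring_scope.

Section Helpers.
Variable R : realType.
Local Notation C := (complex R).

Lemma ReD (x y : C) : complex.Re (x + y) = complex.Re x + complex.Re y.
Proof. by case: x; case: y. Qed.

Lemma ReM_real (x y : R) : complex.Re ((x%:C)%C * (y%:C)%C : C) = x * y.
Proof. by rewrite /= !mulr0 subr0. Qed.

Lemma krausD N K (A : 'I_K -> 'M[C]_N) X Y :
  kraus A (X + Y) = kraus A X + kraus A Y.
Proof. by rewrite /kraus -big_split; apply: eq_bigr => a _; rewrite mulmxDr mulmxDl. Qed.

Lemma trRD N (X Y P : 'M[C]_N) : trR (X + Y) P = trR X P + trR Y P.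
Proof. by rewrite /trR mulmxDl mxtraceD ReD. Qed.

Lemma tr_tens m n (A : 'M[C]_m) (B : 'M[C]_n) : \tr (tensmx A B) = \tr A * \tr B.
Proof. by rewrite /mxtrace mulr_sum; apply: eq_bigr => k _; rewrite mxE. Qed.

Lemma tr_gibbs_proj n beta (E : 'I_n -> R) (P : 'I_n -> 'M[C]_n) l :
  rank_one_resolution P ->
  \tr (gibbs beta E P *m P l) = ((partZ beta E P)^-1 * expR (- beta * E l))%:C%C.
Proof.
case=> Pidem _ Porth _ Ptr.
rewrite /gibbs /expmH -scalemxAl mulmx_suml (bigD1 l) //= big1.
  by rewrite addr0 -scalemxAl Pidem !mxtraceZ Ptr mulr1 rmorphM.
by move=> j hj; rewrite -scalemxAl Porth ?scaler0.
Qed.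

Lemma partZ_pos n beta (E : 'I_n -> R) (P : 'I_n -> 'M[C]_n) (l : 'I_n) :
  rank_one_resolution P -> 0 < partZ beta E P.
Proof.
case=> _ _ _ _ Ptr.
have -> : partZ beta E P = \sum_j expR (- beta * E j).
  rewrite /partZ /expmH (big_morph _ (@mxtraceD _ _) (mxtrace0 _ _)).
  under eq_bigr => j _ do rewrite mxtraceZ Ptr mulr1.
  by rewrite -rmorph_sum.
rewrite (bigD1 l) //=.
have h1 : 0 < expR (- beta * E l) by apply: expR_gt0.
have h2 : 0 <= \sum_(j | j != l) expR (- beta * E j).
  by apply: sumr_ge0 => j _; apply: expR_ge0.
lra.
Qed.

Lemma p_gibbs nA nB beta (EA : 'I_nA -> R) PA (EB : 'I_nB -> R) PB lA lB :
  rank_one_resolution PA -> rank_one_resolution PB ->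
  trR (tens (gibbs beta EA PA) (gibbs beta EB PB)) (tens (PA lA) (PB lB)) =
  ((partZ beta EA PA)^-1 * expR (- beta * EA lA)) *
  ((partZ beta EB PB)^-1 * expR (- beta * EB lB)).
Proof.
move=> hA hB; rewrite /trR /tens tensmx_mul tr_tens.
by rewrite !tr_gibbs_proj // ReM_real.
Qed.

End Helpers.
Theorem mainTheorem6 (R : realType) (nA nB : nat)
  (EiA : 'I_nA -> R) (PiA : 'I_nA -> 'M[complex R]_nA)
  (EfA : 'I_nA -> R) (PfA : 'I_nA -> 'M[complex R]_nA)
  (EiB : 'I_nB -> R) (PiB : 'I_nB -> 'M[complex R]_nB)
  (EfB : 'I_nB -> R) (PfB : 'I_nB -> 'M[complex R]_nB)
  (beta : R) (K : nat) (Ak : 'I_K -> 'M[complex R]_(nA * nB))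
  (pi S : 'M[complex R]_(nA * nB)) (Eab Etab : 'M[complex R]_(nA * nB))
  (lA : 'I_nA) (lB : 'I_nB) (kA : 'I_nA) (kB : 'I_nB) :
  rank_one_resolution PiA -> rank_one_resolution PfA ->
  rank_one_resolution PiB -> rank_one_resolution PfB ->
  0 < beta ->
  (* Phi is CPTP (Kraus form) with a full-rank fixed point pi *)
  trace_preserving Ak ->
  density pi -> pi \in unitmx -> kraus Ak pi = pi ->
  (* S = pi^{1/2} (the positive square root) *)
  psd S -> S *m S = pi ->
  (* correlation terms *)
  is_hermitian Eab -> ptraceA nA nB Eab = 0 -> ptraceB nA nB Eab = 0 ->
  is_hermitian Etab -> ptraceA nA nB Etab = 0 -> ptraceB nA nB Etab = 0 ->
  let gi := tens (gibbs beta EiA PiA) (gibbs beta EiB PiB) in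
  let gf := tens (gibbs beta EfA PfA) (gibbs beta EfB PfB) in
  let rho := gi + Eab in
  let rhot := gf + Etab in
  density rho -> density rhot ->
  let Pl := tens (PiA lA) (PiB lB) in
  let Pk := tens (PfA kA) (PfB kB) in
  let Phi := kraus Ak in
  let Phit := kraus (rev_kraus S Ak) in
  let p_i := fun X => trR X Pl in
  let p_f := fun X => trR (Phi X) Pk in
  let pt_i := fun X => trR X Pk in
  let pt_f := fun X => trR (Phit X) Pl in
  let PG := p_i rho * p_f rho in
  let PGt := pt_i rhot * pt_f rhot in
  let DeltaF := - beta^-1 * ln ((partZ beta EfA PfA * partZ beta EfB PfB) /
                                (partZ beta EiA PiA * partZ beta EiB PiB)) in
  let Psi_i := ln (1 + p_i Eab / p_i gi) in
  let Psi_f := ln (1 + p_f Eab / p_f gi) in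
  let Psit_i := ln (1 + pt_i Etab / pt_i gf) in
  let Psit_f := ln (1 + pt_f Etab / pt_f gf) in
  let DeltaPsi := Psi_i + Psi_f - Psit_i - Psit_f in
  let Deltasigma := ln (p_f gi) - ln (pt_f gf) in
  let DeltaE := EfA kA + EfB kB - EiA lA - EiB lB in
  (* well-definedness of all quantities for this (l, k) *)
  p_i gi != 0 -> 0 < p_f gi -> pt_i gf != 0 -> 0 < pt_f gf ->
  0 < 1 + p_i Eab / p_i gi -> 0 < 1 + p_f Eab / p_f gi ->
  0 < 1 + pt_i Etab / pt_i gf -> 0 < 1 + pt_f Etab / pt_f gf ->
  PGt != 0 -> 0 < PG / PGt ->
  ln (PG / PGt) = beta * (DeltaE - DeltaF) + Deltasigma + DeltaPsi.
Proof.
move=> hiA hfA hiB hfB hb TP dpi upi fixpi psdS SS hE _ _ hEt _ _ gi gf rho rhot _ _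
  Pl Pk Phi Phit p_i p_f pt_i pt_f PG PGt DeltaF Psi_i Psi_f Psit_i Psit_f
  DeltaPsi Deltasigma DeltaE h1 h2 h3 h4 h5 h6 h7 h8 h9 h10.
have ea : p_i gi = ((partZ beta EiA PiA)^-1 * expR (- beta * EiA lA)) *
                   ((partZ beta EiB PiB)^-1 * expR (- beta * EiB lB)).
  by rewrite /p_i /gi /Pl p_gibbs.
have ec : pt_i gf = ((partZ beta EfA PfA)^-1 * expR (- beta * EfA kA)) *
                   ((partZ beta EfB PfB)^-1 * expR (- beta * EfB kB)).
  by rewrite /pt_i /gf /Pk p_gibbs.
have ZiA := @partZ_pos R _ beta EiA _ lA hiA.
have ZiB := @partZ_pos R _ beta EiB _ lB hiB.
have ZfA := @partZ_pos R _ beta EfA _ kA hfA.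
have ZfB := @partZ_pos R _ beta EfB _ kB hfB.
have ha : 0 < p_i gi by rewrite ea !mulr_gt0 ?invr_gt0 ?expR_gt0.
have hc : 0 < pt_i gf by rewrite ec !mulr_gt0 ?invr_gt0 ?expR_gt0.
have l1 : p_i rho = p_i gi + p_i Eab by rewrite /p_i /rho trRD.
have l2 : p_f rho = p_f gi + p_f Eab by rewrite /p_f /rho /Phi krausD trRD.
have l3 : pt_i rhot = pt_i gf + pt_i Etab by rewrite /pt_i /rhot trRD.
have l4 : pt_f rhot = pt_f gf + pt_f Etab by rewrite /pt_f /rhot /Phit krausD trRD.
have fact : forall a y : R, 0 < a -> a + y = a * (1 + y / a).
  by move=> a y ha'; rewrite mulrDr mulr1 mulrCA divff ?mulr1 // gt_eqF.
rewrite /PG /PGt l1 l2 l3 l4 (fact _ _ ha) (fact _ _ h2) (fact _ _ hc) (fact _ _ h4).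
rewrite /DeltaPsi /Psi_i /Psi_f /Psit_i /Psit_f /Deltasigma /DeltaE /DeltaF.
rewrite ln_div ?posrE ?mulr_gt0 //.
rewrite !lnM ?posrE ?mulr_gt0 //.
rewrite ea ec.
rewrite !lnM ?posrE ?mulr_gt0 ?invr_gt0 ?expR_gt0 //.
rewrite !lnV ?posrE ?mulr_gt0 // !expRK.
rewrite !lnM ?posrE ?mulr_gt0 ?invr_gt0 //.
have hb0 : beta != 0 by rewrite gt_eqF.
  by field.
by rewrite invr_gt0 mulr_gt0.
Qed.
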